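(* For each $n\in\mathbb{N}$ let $Y_n\colon\mathbb{I}\to\mathbb{Z}$ be a function such that for every $x\in\mathbb{I}$: (i) $Y_n(x)$ is odd; (ii) if $n=1$, $Y_1(x)\le d_1(x)<Y_1(x)+2$; (iii) if $n\ge2$ and $\epsilon_n(x)=\epsilon_{n-1}(x)$, then $Y_n(x)\le\frac{d_n(x)}{d_{n-1}(x)-1}<Y_n(x)+2$; (iv) if $n\ge2$ and $\epsilon_n(x)=-\epsilon_{n-1}(x)$, then $Y_n(x)\le\frac{d_n(x)}{d_{n-1}(x)+1}<Y_n(x)+2$. Then: (1) $\mathcal{L}(Y_n\ge 2k-1)=\frac{1}{2k-1}$ for all $n,k\in\mathbb{N}$; (2) $\frac{1}{t+2}<\mathcal{L}(Y_n\ge t)\le\frac1t$ for all $n\in\mathbb{N}$ and $t>0$; (3) $\{Y_n\}_{n\ge1}$ is a sequence of independent, identically distributed random variables (with respect to $\mathcal{L}$).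
   Context: $\mathcal{L}$ is Lebesgue measure, $\mathbb{I}=(0,1)\setminus\mathbb{Q}$. Define $T\colon[0,1)\to[0,1)$ by: for $k\in\mathbb{N}$, $Tx=\lceil 1/x\rceil x-1$ if $x\in(\frac{1}{2k},\frac{1}{2k-1})$; $Tx=1-\lfloor 1/x\rfloor x$ if $x\in(\frac{1}{2k+1},\frac{1}{2k})$; $Tx=0$ if $x\in\{0\}\cup\{1/n\colon n\ge 2\}$. For $x\in(0,1)$ define $d_1(x)=\lceil 1/x\rceil$, $s_1(x)=1$ if $x\in[\frac{1}{2k},\frac{1}{2k-1})$ for some $k$, and $d_1(x)=\lfloor 1/x\rfloor$, $s_1(x)=-1$ if $x\in[\frac{1}{2k+1},\frac{1}{2k})$ for some $k$; $d_{n+1}(x)=d_1(T^nx)$, $s_{n+1}(x)=s_1(T^nx)$, $\epsilon_1(x)=1$, $\epsilon_{n+1}(x)=\prod_{k=1}^ns_k(x)$. *)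

(* Defs.v *)
From HB Require Import structures.
From mathcomp Require Import all_boot all_order all_algebra.
From mathcomp Require Import all_classical all_reals all_analysis.
Set Implicit Arguments. Unset Strict Implicit. Unset Printing Implicit Defensive.
Import Order.TTheory GRing.Theory Num.Theory.
Local Open Scope classical_set_scope.
Local Open Scope ring_scope.

Section Defs.
Variable R : realType.

Definition Irr : set R :=
  [set x | 0 < x < 1 /\ ~ (exists q : rat, x = ratr q)].

(* the map T on [0,1) (values outside [0,1) are irrelevant) *)
Definition Tmap (x : R) : R :=
  if `[< exists k : nat, (1 <= k)%N /\
        (2 * k%:R)^-1 < x < (2 * k%:R - 1)^-1 >]
  then (Num.ceil (x^-1))%:~R * x - 1
  else if `[< exists k : nat, (1 <= k)%N /\
        (2 * k%:R + 1)^-1 < x < (2 * k%:R)^-1 >]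
  then 1 - (Num.floor (x^-1))%:~R * x
  else 0.

Definition inA (x : R) : Prop :=
  exists k : nat, (1 <= k)%N /\ (2 * k%:R)^-1 <= x < (2 * k%:R - 1)^-1.

Definition d1 (x : R) : int :=
  if `[< inA x >] then Num.ceil (x^-1) else Num.floor (x^-1).

Definition s1 (x : R) : int := if `[< inA x >] then 1 else -1.

Definition dig (n : nat) (x : R) : int := d1 (iter n.-1 Tmap x).
Definition sgn (n : nat) (x : R) : int := s1 (iter n.-1 Tmap x).

Definition eps (n : nat) (x : R) : int := \prod_(1 <= k < n) sgn k x.

Definition between2 (y : int) (q : R) : Prop := y%:~R <= q < y%:~R + 2.

Definition Yhyp (Y : nat -> R -> int) : Prop :=
  forall (n : nat) (x : R), (1 <= n)%N -> Irr x ->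
    [/\ odd (absz (Y n x)),
        n = 1%N -> between2 (Y 1%N x) (dig 1 x)%:~R,
        (2 <= n)%N -> eps n x = eps n.-1 x ->
          between2 (Y n x) ((dig n x)%:~R / ((dig n.-1 x)%:~R - 1))
      & (2 <= n)%N -> eps n x = - eps n.-1 x ->
          between2 (Y n x) ((dig n x)%:~R / ((dig n.-1 x)%:~R + 1))].

Local Open Scope ereal_scope.

Definition iid_Irr (Y : nat -> R -> int) : Prop :=
  [/\ (forall (n : nat) (A : set int), (1 <= n)%N ->
         measurable (Irr `&` Y n @^-1` A)),
      (forall (n m : nat) (A : set int), (1 <= n)%N -> (1 <= m)%N ->
         lebesgue_measure (Irr `&` Y n @^-1` A)
         = lebesgue_measure (Irr `&` Y m @^-1` A))
    & (forall (s : seq nat) (A : nat -> set int),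
         uniq s -> all (fun n => 1 <= n)%N s ->
         lebesgue_measure (Irr `&` \bigcap_(i in [set` s]) Y i @^-1` A i)
         = \prod_(i <- s) lebesgue_measure (Irr `&` Y i @^-1` A i))].

End Defs.

(* Main.v *)
Require Import Defs.
From HB Require Import structures.
From mathcomp Require Import all_boot all_order all_algebra.
From mathcomp Require Import all_classical all_reals all_analysis.
From mathcomp Require Import zify ring lra.
Import Order.TTheory GRing.Theory Num.Theory.
Local Open Scope classical_set_scope.
Local Open Scope ring_scope.
Set Implicit Arguments. Unset Strict Implicit. Unset Printing Implicit Defensive.
Section Aux.
Variable R : realType.
Implicit Types (y : R).

Lemma inv_lt_mul (a y : R) : 0 < a -> 0 < y -> (a^-1 < y) = (1 < a * y).
Proof. by move=> a0 y0; rewrite -div1r ltr_pdivrMr // mulrC. Qed.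
Lemma inv_le_mul (a y : R) : 0 < a -> 0 < y -> (a^-1 <= y) = (1 <= a * y).
Proof. by move=> a0 y0; rewrite -div1r ler_pdivrMr // mulrC. Qed.
Lemma mul_lt_inv (a y : R) : 0 < a -> 0 < y -> (y < a^-1) = (a * y < 1).
Proof. by move=> a0 y0; rewrite -div1r ltr_pdivlMr // mulrC. Qed.

Lemma lt_inv (a y : R) : 0 < y -> (a < y^-1) = (a * y < 1).
Proof. by move=> y0; rewrite -div1r ltr_pdivlMr. Qed.
Lemma le_inv (a y : R) : 0 < y -> (a <= y^-1) = (a * y <= 1).
Proof. by move=> y0; rewrite -div1r ler_pdivlMr. Qed.
Lemma inv_lt (a y : R) : 0 < y -> (y^-1 < a) = (1 < a * y).
Proof. by move=> y0; rewrite -div1r ltr_pdivrMr. Qed.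
Lemma inv_le (a y : R) : 0 < y -> (y^-1 <= a) = (1 <= a * y).
Proof. by move=> y0; rewrite -div1r ler_pdivrMr. Qed.

Lemma natr_lt (m n : nat) : ((m%:R : R) < n%:R) -> (m < n)%N.
Proof. by rewrite ltr_nat. Qed.

Lemma step_odd y (K : nat) : 0 < y -> K%:R * y < 1 -> 1 < K.+1%:R * y -> odd K ->
  [/\ inA y, Tmap y = K.+1%:R * y - 1, d1 y = K.+1%:Z & s1 y = 1].
Proof.
move=> y0 h1 h2 oK.
have [k hk] : exists k, K.+1 = (2 * k)%N by exists (K.+1 %/ 2)%N; lia.
have k1 : (1 <= k)%N by lia.
have e2k : 2 * k%:R = K.+1%:R :> R by rewrite hk natrM.
have e2k1 : 2 * k%:R - 1 = K%:R :> R by rewrite e2k -addn1 natrD addrK.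
have K0 : (0 < K)%N by case: K oK {h1 h2 hk e2k e2k1}.
have K0r : (0 : R) < K%:R by rewrite ltr0n.
have inAy : inA y.
  exists k; split => //; rewrite e2k1 e2k inv_le_mul ?mul_lt_inv ?ltr0n //.
  by rewrite h1 ltW.
have ceilE : Num.ceil y^-1 = K.+1%:Z.
  apply: ceil_def; have -> : (K.+1%:Z - 1) = K%:Z by lia.
  by rewrite -!pmulrn lt_inv // inv_le // h1 ltW.
split => //.
- rewrite /Tmap asboolT; first by rewrite ceilE -pmulrn.
  exists k; split => //.
  by rewrite e2k1 e2k inv_lt_mul ?mul_lt_inv ?ltr0n // h1 h2.
- by rewrite /d1 asboolT.
- by rewrite /s1 asboolT.
Qed.

Lemma step_even y (K : nat) : 0 < y -> K%:R * y < 1 -> 1 < K.+1%:R * y -> ~~ odd K ->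
  (0 < K)%N ->
  [/\ ~ inA y, Tmap y = 1 - K%:R * y, d1 y = K%:Z & s1 y = -1].
Proof.
move=> y0 h1 h2 eK K0.
have [k hk] : exists k, K = (2 * k)%N by exists (K %/ 2)%N; lia.
have k1 : (1 <= k)%N by lia.
have e2k : 2 * k%:R = K%:R :> R by rewrite hk natrM.
have K0r : (0 : R) < K%:R by rewrite ltr0n.
have notA : forall k' : nat, (1 <= k')%N -> (2 * k'%:R)^-1 <= y ->
    ~ (y < (2 * k'%:R - 1)^-1).
  move=> k' k'1 hl hu.
  have e' : 2 * k'%:R = (2 * k')%:R :> R by rewrite natrM.
  have e1 : 2 * k'%:R - 1 = (2 * k').-1%:R :> R.
    by rewrite e' -[in LHS](@prednK (2 * k')) ?muln_gt0 // -addn1 natrD addrK.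
  rewrite e1 mul_lt_inv ?ltr0n // in hu; last by lia.
  rewrite e' inv_le_mul ?ltr0n // in hl; last by lia.
  have a1 : (K < 2 * k')%N.
    apply: natr_lt; rewrite -(ltr_pM2r y0); apply: (lt_le_trans h1 hl).
  have a2 : ((2 * k').-1 < K.+1)%N.
    apply: natr_lt; rewrite -(ltr_pM2r y0); apply: (lt_trans hu h2).
  move: eK; rewrite hk; lia.
have floorE : Num.floor y^-1 = K%:Z.
  apply: floor_def; have -> : (K%:Z + 1) = K.+1%:Z by lia.
  by rewrite -!pmulrn inv_lt // le_inv // h2 ltW.
split => //.
- by case => k' [k'1 /andP [hl hu]]; apply: (notA k').
- rewrite /Tmap asboolF; last first.
    by case => k' [k'1 /andP [hl hu]]; apply: (notA k' k'1 (ltW hl)).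
  rewrite asboolT; first by rewrite floorE -pmulrn.
  exists k; split => //.
  rewrite e2k natr1.
  by rewrite inv_lt_mul ?mul_lt_inv ?ltr0n // h1 h2.
- by rewrite /d1 asboolF // => -[k' [k'1 /andP [hl hu]]]; apply: (notA k').
- by rewrite /s1 asboolF // => -[k' [k'1 /andP [hl hu]]]; apply: (notA k').
Qed.

End Aux.
Section Dyn.
Variable R : realType.
Implicit Types (y : R).

Definition yy n (x : R) := iter n (@Tmap R) x.
Definition Kf y : nat := `|Num.floor (y^-1)|%N.
Definition mm (n : nat) (x : R) : nat :=
  if n is n'.+1 then (if odd (Kf (yy n' x)) then Kf (yy n' x) else (Kf (yy n' x)).+1)
  else 1%N.
Definition oddfl (q : R) : int := 2 * Num.floor ((q - 1) / 2) + 1.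

Lemma IrrP y : Irr y -> [/\ 0 < y, y < 1 & ~ exists q : rat, y = ratr q].
Proof. by case=> /andP [h1 h2] h3. Qed.

Lemma irr_affine y (a b : rat) : a != 0 -> (~ exists q : rat, y = ratr q) ->
  ~ exists q : rat, ratr a * y + ratr b = ratr q.
Proof.
move=> a0 ny [q hq]; apply: ny; exists ((q - b) / a).
rewrite fmorph_div rmorphB /= -hq addrK mulrC mulKf //.
by rewrite fmorph_eq0.
Qed.

Lemma Kf_spec y : Irr y -> [/\ (0 < Kf y)%N, (Kf y)%:R * y < 1 & 1 < (Kf y).+1%:R * y].
Proof.
case/IrrP=> y0 y1 ny.
have [hl hu] := andP (floor_itv (y^-1)).
set f := Num.floor y^-1 in hl hu *.
have f1 : 1 <= f.
  by rewrite -[1]/(1%:Z) floor_ge_int /f -[1%:~R]/(1 : R) le_inv // mul1r ltW.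
have ef : (Kf y)%:R = f%:~R :> R.
  by rewrite /Kf -/f natr_absz ger0_norm // (le_trans _ f1).
have fne : f%:~R != y^-1 :> R.
  apply/eqP => e; apply: ny; exists (f%:~R^-1).
  by rewrite fmorphV rmorph_int e invrK.
have hl' : f%:~R < y^-1 :> R by rewrite lt_neqAle fne hl.
split.
- by rewrite /Kf -/f; lia.
- by rewrite ef -lt_inv.
- by rewrite -natr1 ef -inv_lt // -[1]/(1%:~R : R) -intrD.
Qed.

Lemma T_spec y : Irr y ->
  let K := Kf y in
  [/\ (0 < K)%N, K%:R * y < 1, 1 < K.+1%:R * y &
    [/\ Tmap y = (if odd K then K.+1%:R * y - 1 else 1 - K%:R * y),
      d1 y = (if odd K then K.+1%:Z else K%:Z) &
      s1 y = (if odd K then 1 else -1)]].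
Proof.
move=> hy K; have [K0 h1 h2] := Kf_spec hy.
have [y0 y1 ny] := IrrP hy.
split => //; case: ifP => oK.
  by have [_ -> -> ->] := step_odd y0 h1 h2 oK.
by have [_ -> -> ->] := step_even y0 h1 h2 (negbT oK) K0.
Qed.

Lemma Irr_T y : Irr y -> Irr (Tmap y).
Proof.
move=> hy; have [K0 h1 h2 [-> _ _]] := T_spec hy.
have [y0 y1 ny] := IrrP hy.
move: h1 h2; set K := Kf y => h1 h2.
have eK : K.+1%:R = K%:R + 1 :> R by rewrite natr1.
have K0r : (1 : R) <= K%:R by rewrite ler1n.
case: ifP => _.
  split; first by apply/andP; split; rewrite eK in h2 *; nra.
  have Kn0 : (K.+1%:Q) != 0 by rewrite pnatr_eq0.
  have := irr_affine (a := K.+1%:Q) (b := -1) Kn0 ny.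
  apply: contra_not => -[q hq]; exists q.
  by rewrite rmorph_nat rmorphN rmorph1 -hq.
split; first by apply/andP; split; rewrite eK in h2 *; nra.
have Kn0 : (K%:Q) != 0 by rewrite pnatr_eq0; lia.
have KN0 : (- K%:Q) != 0 by rewrite oppr_eq0.
have := irr_affine (a := - K%:Q) (b := 1) KN0 ny.
apply: contra_not => -[q hq]; exists q.
by rewrite rmorphN rmorph_nat rmorph1 -hq mulNr addrC.
Qed.

End Dyn.
Section Dyn2.
Variable R : realType.
Implicit Types (y : R).

Lemma yyS n (x : R) : yy n.+1 x = Tmap (yy n x). Proof. by []. Qed.

Lemma inv_state (x : R) n : Irr x ->
  [/\ Irr (yy n x), (0 < mm n x)%N, (mm n x)%:R * yy n x < 1 & odd (mm n x)].
Proof.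
move=> hx; elim: n => [|n [hy m0 my om]].
  by have [? ? ?] := IrrP hx; split => //; rewrite mul1r.
rewrite yyS /=.
have [K0 h1 h2 [eT _ _]] := T_spec hy.
move: h1 h2 eT; set K := Kf (yy n x); set y := yy n x => h1 h2 eT.
have eK : K.+1%:R = K%:R + 1 :> R by rewrite natr1.
have K1 : (1 : R) <= K%:R by rewrite ler1n.
have y0 : 0 < y by case/IrrP: hy.
split; first exact: Irr_T.
- by case: ifP.
- rewrite eT; case: ifP => oK; rewrite ?eK in h2 *; nra.
- by case: ifP => // oK /=; rewrite oK.
Qed.

Lemma between_uniq (c1 c2 : int) (q : R) : odd `|c1|%N -> odd `|c2|%N ->
  between2 c1 q -> between2 c2 q -> c1 = c2.
Proof.
move=> o1 o2 /andP [a1 b1] /andP [a2 b2].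
have h1 : (c1%:~R : R) < (c2 + 2)%:~R by rewrite intrD (le_lt_trans a1 b2).
have h2 : (c2%:~R : R) < (c1 + 2)%:~R by rewrite intrD (le_lt_trans a2 b1).
rewrite ltr_int in h1; rewrite ltr_int in h2; lia.
Qed.

Lemma oddfl_spec (q : R) : odd `|oddfl q|%N /\ between2 (oddfl q) q.
Proof.
split; first by rewrite /oddfl; lia.
have [hl hu] := andP (floor_itv ((q - 1) / 2)).
rewrite /between2 /oddfl intrD intrM.
rewrite intrD in hu.
apply/andP; split; rewrite -[2%:~R]/(2 : R) -[1%:~R]/(1 : R) in hu *; lra.
Qed.

Lemma oddfl_uniq (c : int) (q : R) : odd `|c|%N -> between2 c q -> c = oddfl q.
Proof.
move=> oc hc; have [ho hb] := oddfl_spec q; exact: between_uniq oc ho hc hb.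
Qed.

Lemma between_rescale (c d : int) (M : nat) y : 0 < y -> (0 < M)%N -> odd M ->
  ~~ odd `|d|%N -> (d%:~R - 1) * y < 1 -> 1 < (d%:~R + 1) * y -> odd `|c|%N ->
  between2 c ((d%:~R : R) / M%:R) -> between2 c ((M%:R * y)^-1).
Proof.
move=> y0 M0 oM ed hd1 hd2 oc /andP [b1 b2].
have M0r : (0 : R) < M%:R by rewrite ltr0n.
rewrite ler_pdivlMr // in b1.
rewrite ltr_pdivrMr // in b2.
have i1 : (c * M%:Z <= d)%R.
  by rewrite -(ler_int R) intrM -pmulrn.
have i2 : (d < (c + 2) * M%:Z)%R.
  by rewrite -(ltr_int R) intrM -pmulrn intrD.
have ocM : odd `|(c * M%:Z)%R|%N by rewrite abszM oddM oc.
have j1 : (c * M%:Z <= d - 1)%R by lia.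
have j2 : (d + 1 <= (c + 2) * M%:Z)%R by lia.
rewrite -(ler_int R) intrM intrB -pmulrn in j1.
rewrite -(ler_int R) intrM intrD intrD -pmulrn in j2.
have My0 : 0 < M%:R * y by rewrite mulr_gt0.
apply/andP; split.
  rewrite le_inv //; rewrite -[1%:~R]/(1 : R) in j1; nra.
rewrite inv_lt //; rewrite -[1%:~R]/(1 : R) -[2%:~R]/(2 : R) in j2; nra.
Qed.

End Dyn2.
Section Yid.
Variable R : realType.
Variable Y : nat -> R -> int.
Hypothesis HY : Yhyp Y.

Lemma Y_between_d n (x : R) : Irr x ->
  between2 (Y n.+1 x) (((d1 (yy n x))%:~R : R) / (mm n x)%:R).
Proof.
move=> hx; case: n => [|n].
  have [_ h _ _] := HY (isT : (0 < 1)%N) hx.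
  by rewrite /= divr1; apply: h.
have [_ _ h3 h4] := HY (isT : (0 < n.+2)%N) hx.
have [hy _ _ _] := inv_state n hx.
have [K0 _ _ [_ ed es]] := T_spec hy.
have epsE : eps n.+2 x = eps n.+1 x * sgn n.+1 x.
  by rewrite /eps big_nat_recr.
rewrite /sgn /= -/(yy n x) es in epsE.
move: h3 h4 epsE; rewrite /dig /= -/(yy n x) -/(yy n.+1 x) ed /=.
case: ifP => oK h3 h4 epsE.
  rewrite mulr1 in epsE; have := h3 isT epsE.
  by rewrite -[X in X - 1]pmulrn -natr1 addrK.
rewrite mulrN1 in epsE; have := h4 isT epsE.
by rewrite -pmulrn natr1.
Qed.

Lemma Y_state n (x : R) : Irr x ->
  Y n.+1 x = oddfl (((mm n x)%:R * yy n x)^-1).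
Proof.
move=> hx; have [oY _ _ _] := HY (isT : (0 < n.+1)%N) hx.
have [hy M0 My oM] := inv_state n hx.
have [K0 h1 h2 [_ ed _]] := T_spec hy.
have y0 : 0 < yy n x by case/IrrP: hy.
apply: oddfl_uniq => //.
apply: (between_rescale (d := d1 (yy n x))) => //.
- by rewrite ed; case: ifP => oK /=; rewrite ?oK //; lia.
- rewrite ed; case: ifP => _ /=; rewrite -?pmulrn.
    by rewrite -natr1 addrK.
  by apply: le_lt_trans h1; rewrite ler_pM2r // lerBlDr lerDl.
- rewrite ed; case: ifP => _ /=; rewrite -?pmulrn.
    by apply: (lt_le_trans h2); rewrite ler_pM2r // lerDl.
  by rewrite natr1.
exact: Y_between_d.
Qed.

End Yid.
Section Base.
Variable R : realType.
Notation L := (@lebesgue_measure R).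

Lemma ratr_countable : countable (range (@ratr R)).
Proof. exact: (sub_countable (card_image_le _ _) (countableP _)). Qed.

Lemma mrat : measurable (range (@ratr R)).
Proof.
apply: countable_measurable; [exact: measurable_set1 | exact: ratr_countable].
Qed.

Lemma Irr_itv (c d : R) : 0 <= c -> d <= 1 ->
  @Irr R `&` [set x | c < x < d] = `]c, d[ `\` range (@ratr R).
Proof.
move=> c0 d1; apply/seteqP; split => x /=.
  case=> -[/andP [x0 x1] nq] /andP [cx xd]; split; first by rewrite in_itv /= cx xd.
  by case=> q _ e; apply: nq; exists q.
rewrite in_itv /= => -[/andP [cx xd] nq]; split; last by rewrite cx xd.
split; first by apply/andP; split; [exact: le_lt_trans cx|exact: lt_le_trans d1].
by case=> q e; apply: nq; exists q.
Qed.

Lemma L_Irr_itv (c d : R) : 0 <= c -> c <= d -> d <= 1 ->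
  measurable (@Irr R `&` [set x | c < x < d]) /\
  L (@Irr R `&` [set x | c < x < d]) = (d - c)%:E.
Proof.
move=> c0 cd d1; rewrite Irr_itv //; split.
  by apply: measurableD; [exact: measurable_itv | exact: mrat].
rewrite measureD //; last 2 first.
- exact: mrat.
- have := lebesgue_measure_itv `]c, d[; rewrite /= => ->.
  by case: ifP => _; rewrite ?ltry.
have := @countable_lebesgue_measure0 R (`]c, d[ `&` range (@ratr R)).
move=> /(_ (sub_countable (subset_card_le (@subIsetr _ _ _)) ratr_countable)) /= ->.
have := lebesgue_measure_itv `]c, d[; rewrite /= => ->.
rewrite sube0.
move: cd; rewrite le_eqVlt => /orP [/eqP -> | cd].
  by rewrite ltxx subrr.
by rewrite lte_fin cd EFinB.
Qed.

Lemma Irr_meas : measurable (@Irr R) /\ L (@Irr R) = 1%E.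
Proof.
have [h1 h2] := @L_Irr_itv 0 1 (lexx _) ler01 (lexx _).
have -> : @Irr R = @Irr R `&` [set x | 0 < x < 1].
  by apply/seteqP; split => x; [move=> hx; split => //; case: hx | case].
by rewrite h2 subr0.
Qed.

End Base.
Section Meas.
Variable R : realType.
Variable Y : nat -> R -> int.
Hypothesis HY : Yhyp Y.
Notation L := (@lebesgue_measure R).

Definition hist n (B : nat -> set int) (x : R) :=
  forall i, (i < n)%N -> B i (Y i.+1 x).
Definition EE n B (M : nat) (c d : R) : set R :=
  @Irr R `&` [set x | [/\ hist n B x, mm n x = M & c < yy n x < d]].

Lemma Kuniq (K J : nat) (y : R) : 0 < y -> K%:R * y < 1 -> 1 < K.+1%:R * y ->
  J%:R * y < 1 -> 1 < J.+1%:R * y -> K = J.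
Proof.
move=> y0 a1 a2 b1 b2.
have c1 : (K < J.+1)%N.
  by apply: (@natr_lt R); rewrite -(ltr_pM2r y0); apply: (lt_trans a1 b2).
have c2 : (J < K.+1)%N.
  by apply: (@natr_lt R); rewrite -(ltr_pM2r y0); apply: (lt_trans b1 a2).
lia.
Qed.

Lemma oddfl_const (p M : nat) (y : R) : 0 < y -> (0 < M)%N ->
  p%:R * y <= 1 -> 1 < p.+1%:R * y ->
  oddfl ((M%:R * y)^-1) = oddfl (p%:R / M%:R : R).
Proof.
move=> y0 M0 h1 h2.
have [oc /andP [b1 b2]] := oddfl_spec (p%:R / M%:R : R).
set c := oddfl _ in oc b1 b2 *.
symmetry; apply: oddfl_uniq oc _.
have M0r : (0 : R) < M%:R by rewrite ltr0n.
rewrite ler_pdivlMr // in b1.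
rewrite ltr_pdivrMr // in b2.
have i2 : ((p%:Z) < (c + 2) * M%:Z)%R.
  by rewrite -(ltr_int R) intrM -!pmulrn intrD.
have j2 : ((p.+1%:Z) <= (c + 2) * M%:Z)%R by lia.
rewrite -(ler_int R) intrM intrD -!pmulrn in j2.
have My0 : 0 < M%:R * y by rewrite mulr_gt0.
apply/andP; split.
  rewrite le_inv //; nra.
rewrite inv_lt //; nra.
Qed.

Lemma arith1 (Nr y d : R) : 0 < Nr -> y * (Nr + 1) < 1 + d -> Nr * d <= 1 ->
  Nr * y < 1.
Proof. move=> *; nra. Qed.
Lemma arith2 (P y d : R) : 0 < P -> 1 - d < y * P -> (P + 1) * d <= 1 ->
  1 < (P + 1) * y.
Proof. move=> *; nra. Qed.

Definition co n (B : nat -> set int) (N M : nat) :=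
  [/\ odd N, (0 < M)%N, (M <= N)%N & B n (oddfl (N%:R / M%:R : R))].
Definition ce n (B : nat -> set int) (N M : nat) :=
  [/\ odd N, (0 < M)%N, (M < N)%N & B n (oddfl (N.-1%:R / M%:R : R))].
Definition Po n B N c d M : set R :=
  if `[< co n B N M >] then EE n B M ((1 + c) / N.+1%:R) ((1 + d) / N.+1%:R)
  else set0.
Definition Pe n B N c d M : set R :=
  if `[< ce n B N M >] then EE n B M ((1 - d) / N.-1%:R) ((1 - c) / N.-1%:R)
  else set0.

Lemma step_set n B (N : nat) (c d : R) : (0 < N)%N -> 0 <= c -> c <= d ->
  d <= N%:R^-1 ->
  EE n.+1 B N c d = \bigcup_M (Po n B N c d M `|` Pe n B N c d M).
Proof.
move=> N0 c0 cd dN.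
have N0r : (0 : R) < N%:R by rewrite ltr0n.
have Nd : N%:R * d <= 1 by rewrite mulrC -le_inv.
have eN1 : N.+1%:R = N%:R + 1 :> R by rewrite natr1.
have N1r : (0 : R) < N.+1%:R by rewrite ltr0n.
apply/seteqP; split => x.
  case=> hx [hh hm /andP [hc hd]].
  have [hy M0 My oM] := inv_state n hx.
  have [K0 h1 h2 [eT _ _]] := T_spec hy.
  have y0 : 0 < yy n x by case/IrrP: hy.
  have eY := Y_state HY n hx.
  have hB : B n (Y n.+1 x) by apply: hh.
  have hh' : hist n B x by move=> i hi; apply: hh; rewrite ltnS ltnW.
  rewrite yyS eT in hc hd.
  move: hm; rewrite /= -/(yy n x).
  move: h1 h2 hc hd eY hB; set y := yy n x; set K := Kf y; set M := mm n x.
  move=> h1 h2 hc hd eY hB hm.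
  have MK : (M < K.+1)%N.
    by apply: (@natr_lt R); rewrite -(ltr_pM2r y0); apply: (lt_trans My h2).
  have oc := oddfl_const y0 M0 (ltW h1) h2.
  exists M; first done.
  case oK: (odd K) in hm hc hd.
    left; rewrite /Po asboolT; last by rewrite /co -hm; split => //; rewrite -oc -eY.
    rewrite hm in hc hd; split => //; split => //.
    rewrite ltr_pdivrMr // ltr_pdivlMr //; rewrite !eN1 in hc hd *.
    by rewrite -/y; apply/andP; split; lra.
  right; rewrite /Pe asboolT; last first.
    by rewrite /ce -hm /= oK; split => //; rewrite -oc -eY.
  split => //; split => //; rewrite -hm /=.
  have K0r : (0 : R) < K%:R by rewrite ltr0n.
  by rewrite ltr_pdivrMr // ltr_pdivlMr // -/y; apply/andP; split; lra.
case=> M _ [].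
  rewrite /Po; case: asboolP => [[oN M0 MN hBo] | _] //.
  case=> hx [hh hm /andP [ha hb]].
  have [hy _ My oM] := inv_state n hx.
  have [K0 h1 h2 [eT _ _]] := T_spec hy.
  have y0 : 0 < yy n x by case/IrrP: hy.
  have eY := Y_state HY n hx.
  rewrite ltr_pdivrMr // in ha; rewrite ltr_pdivlMr // in hb.
  have hN1 : N%:R * yy n x < 1.
    by rewrite eN1 in hb; apply: arith1 N0r hb Nd.
  have hN2 : 1 < N.+1%:R * yy n x by lra.
  have eK : Kf (yy n x) = N by apply: Kuniq y0 h1 h2 hN1 hN2.
  split => //; split.
  - move=> i; rewrite ltnS leq_eqVlt => /orP [/eqP -> | hi]; last exact: hh.
    by rewrite eY hm (oddfl_const y0 M0 (ltW hN1) hN2).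
  - by rewrite /= eK oN.
  - by rewrite yyS eT eK oN; rewrite eN1 in ha hb *; apply/andP; split; lra.
rewrite /Pe; case: asboolP => [[oN M0 MN hBo] | _] //.
case=> hx [hh hm /andP [ha hb]].
have [hy _ My oM] := inv_state n hx.
have [K0 h1 h2 [eT _ _]] := T_spec hy.
have y0 : 0 < yy n x by case/IrrP: hy.
have eY := Y_state HY n hx.
have N2 : (1 < N)%N by apply: leq_ltn_trans MN.
have eN : N%:R = N.-1%:R + 1 :> R by rewrite natr1 prednK.
have Np0 : (0 : R) < N.-1%:R by rewrite ltr0n -ltnS prednK.
rewrite ltr_pdivrMr // in ha; rewrite ltr_pdivlMr // in hb.
have hN1 : N.-1%:R * yy n x < 1 by lra.
have hN2 : 1 < N.-1.+1%:R * yy n x.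
  by rewrite -natr1; rewrite eN in Nd; apply: arith2 Np0 ha Nd.
have eK : Kf (yy n x) = N.-1 by apply: Kuniq y0 h1 h2 hN1 hN2.
have eN' : ~~ odd N.-1 by move: oN; rewrite -{1}(prednK N0).
split => //; split.
- move=> i; rewrite ltnS leq_eqVlt => /orP [/eqP -> | hi]; last exact: hh.
  by rewrite eY hm (oddfl_const y0 M0 (ltW hN1) hN2).
- by rewrite /= eK (negbTE eN') prednK.
- by rewrite yyS eT eK (negbTE eN'); apply/andP; split; lra.
Qed.

End Meas.
Section Q.
Variable R : realType.
Variable Y : nat -> R -> int.
Hypothesis HY : Yhyp Y.
Notation L := (@lebesgue_measure R).
Local Notation EE := (EE Y).
Local Notation Po := (Po Y).
Local Notation Pe := (Pe Y).
Local Notation co := (co R).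
Local Notation ce := (ce R).

Definition Qprop n := forall B (M : nat) (c d : R), (0 < M)%N -> 0 <= c -> c <= d ->
  d <= M%:R^-1 ->
  measurable (EE n B M c d) /\
  L (EE n B M c d) = ((M%:R * (d - c))%:E * L (EE n B M 0 M%:R^-1))%E.

Lemma Q0 : Qprop 0.
Proof.
move=> B M c d M0 c0 cd dM.
case: (eqVneq M 1%N) => [eM | M1].
  subst M.
  have E : forall c d, EE 0 B 1 c d = @Irr R `&` [set x | c < x < d].
    move=> c' d'; apply/seteqP; split => x /=.
      by case=> hx [_ _ h].
    by case=> hx h; split => //; split.
  rewrite !E invr1; rewrite invr1 in dM.
  have [m1 l1] := L_Irr_itv c0 cd dM.
  have [_ l2] := L_Irr_itv (lexx (0 : R)) ler01 (lexx 1).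
  by rewrite l1 l2 subr0 mul1r mule1.
have E : forall c d, EE 0 B M c d = set0.
  move=> c' d'; apply/seteqP; split => x //= [_ [_ e _]].
  by rewrite -e in M1.
by rewrite !E measure0 mule0.
Qed.

Definition wgt n B (N M : nat) : R :=
  (if `[< co n B N M >] then M%:R / N.+1%:R else 0) +
  (if `[< ce n B N M >] then M%:R / N.-1%:R else 0).

Lemma wgt_ge0 n B N M : 0 <= wgt n B N M.
Proof.
rewrite /wgt; apply: addr_ge0; case: ifP => _ //; apply: divr_ge0; exact: ler0n.
Qed.

Lemma arith3 (Nr y d : R) : 1 < Nr -> Nr * d <= 1 -> y * (Nr + 1) < 1 + d ->
  1 - d < y * (Nr - 1) -> False.
Proof. move=> *; nra. Qed.

Lemma PoPe_mm n B N c d M x : (Po n B N c d M `|` Pe n B N c d M) x -> mm n x = M.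
Proof.
by rewrite /Po /Pe; case: asboolP => _; case: asboolP => _ [] [] // _ [_ ->].
Qed.

Lemma piece_meas n (IH : Qprop n) B (N : nat) (c d : R) M : (0 < N)%N ->
  0 <= c -> c <= d -> d <= N%:R^-1 ->
  measurable (Po n B N c d M `|` Pe n B N c d M) /\
  L (Po n B N c d M `|` Pe n B N c d M) =
    ((d - c)%:E * ((wgt n B N M)%:E * L (EE n B M 0 M%:R^-1)))%E.
Proof.
move=> N0 c0 cd dN.
have N0r : (0 : R) < N%:R by rewrite ltr0n.
have Nd : N%:R * d <= 1 by rewrite mulrC -le_inv.
have N1r : (0 : R) < N.+1%:R by rewrite ltr0n.
have eN1 : N.+1%:R = N%:R + 1 :> R by rewrite natr1.
have hPo : measurable (Po n B N c d M) /\
    L (Po n B N c d M) = (((d - c) * (if `[< co n B N M >] then M%:R / N.+1%:R else 0))%:E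
       * L (EE n B M 0 M%:R^-1))%E.
  rewrite /Po; case: asboolP => [[oN M0 MN _] | _]; last first.
    by rewrite measure0 mulr0 mul0e.
  have M0r : (0 : R) < M%:R by rewrite ltr0n.
  have MNr : (M%:R : R) <= N%:R by rewrite ler_nat.
  have [||| m ->] := IH B M ((1 + c) / N.+1%:R) ((1 + d) / N.+1%:R) M0.
  - by apply: divr_ge0 => //; apply: addr_ge0.
  - by rewrite ler_pM2r ?invr_gt0 // lerD2l.
  - rewrite le_inv // mulrAC ler_pdivrMr // mul1r eN1.
    have : M%:R * d <= 1.
      by apply: le_trans Nd; apply: ler_wpM2r => //; exact: le_trans c0 cd.
    lra.
  split => //; congr (_ * _)%E; congr EFin; rewrite -mulrBl; field.
  by rewrite addrC natr1 pnatr_eq0.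
have hPe : measurable (Pe n B N c d M) /\
    L (Pe n B N c d M) = (((d - c) * (if `[< ce n B N M >] then M%:R / N.-1%:R else 0))%:E
       * L (EE n B M 0 M%:R^-1))%E.
  rewrite /Pe; case: asboolP => [[oN M0 MN _] | _]; last first.
    by rewrite measure0 mulr0 mul0e.
  have M0r : (0 : R) < M%:R by rewrite ltr0n.
  have Np0 : (0 : R) < N.-1%:R by rewrite ltr0n -ltnS prednK // (leq_ltn_trans M0 MN).
  have MNr : (M%:R : R) <= N.-1%:R by rewrite ler_nat -ltnS prednK.
  have d1 : d <= 1 by apply: (le_trans dN); rewrite invf_le1 // ler1n.
  have [||| m ->] := IH B M ((1 - d) / N.-1%:R) ((1 - c) / N.-1%:R) M0.
  - by apply: divr_ge0 => //; rewrite subr_ge0.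
  - by rewrite ler_pM2r ?invr_gt0 // lerD2l lerN2.
  - rewrite le_inv // mulrAC ler_pdivrMr // mul1r; nra.
  split => //; congr (_ * _)%E; congr EFin; rewrite -mulrBl; field.
  exact: lt0r_neq0 Np0.
have [mo lo] := hPo; have [me le] := hPe.
split; first exact: measurableU.
have -> : L (Po n B N c d M `|` Pe n B N c d M) =
    (L (Po n B N c d M) + L (Pe n B N c d M))%E.
  apply: measureU => //.
  rewrite /Po /Pe; case: asboolP => [[oN M0 MN _] | _]; last by rewrite set0I.
  case: asboolP => [[_ _ MN' _] | _]; last by rewrite setI0.
  apply/seteqP; split => x // [[_ [_ _ /andP [_ hb]]] [_ [_ _ /andP [ha _]]]].
  have N2 : (1 < N)%N by apply: leq_ltn_trans MN'.
  have eN : N.-1%:R = N%:R - 1 :> R by rewrite -[in RHS](prednK N0) -natr1 addrK.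
  rewrite ltr_pdivlMr // eN1 in hb; rewrite eN ltr_pdivrMr ?subr_gt0 ?ltr1n // in ha.
  have N2r : (1 : R) < N%:R by rewrite ltr1n.
  by have := arith3 N2r Nd hb ha.
rewrite lo le -ge0_muleDl; last 2 first.
- by rewrite lee_fin mulr_ge0 ?subr_ge0 //; case: ifP => _ //; apply: divr_ge0.
- by rewrite lee_fin mulr_ge0 ?subr_ge0 //; case: ifP => _ //; apply: divr_ge0.
by rewrite -EFinD -mulrDr EFinM muleA.
Qed.

End Q.
Section Q2.
Variable R : realType.
Variable Y : nat -> R -> int.
Hypothesis HY : Yhyp Y.
Notation L := (@lebesgue_measure R).
Local Notation EE := (EE Y).
Local Notation Po := (Po Y).
Local Notation Pe := (Pe Y).
Local Notation Qprop := (Qprop Y).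

Lemma Qstep n : Qprop n -> Qprop n.+1.
Proof.
move=> IH B N c d N0 c0 cd dN.
pose S := (\sum_(M <oo | M \in setT)
   ((wgt R n B N M)%:E * L (EE n B M 0 M%:R^-1)))%E.
have key : forall c d, 0 <= c -> c <= d -> d <= N%:R^-1 ->
  measurable (EE n.+1 B N c d) /\ L (EE n.+1 B N c d) = ((d - c)%:E * S)%E.
  move=> c' d' c0' cd' dN'.
  rewrite (step_set HY n B N0 c0' cd' dN').
  have hp := fun M => piece_meas IH B M N0 c0' cd' dN'.
  split; first by apply: bigcup_measurable => M _; case: (hp M).
  have hb := @measure_bigcup _ _ _ L setT
    (fun M => Po n B N c' d' M `|` Pe n B N c' d' M).
  rewrite hb; last 2 first.
  - by move=> M _; case: (hp M).
  - move=> i j _ _ [x [hi hj]].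
    by rewrite -(PoPe_mm hi) -(PoPe_mm hj).
  apply: eq_trans (eq_eseriesr (fun M _ => proj2 (hp M))) _.
  apply: nneseriesZl => M _; apply: mule_ge0 => //.
  by rewrite lee_fin; exact: wgt_ge0.
have N0r : (0 : R) < N%:R by rewrite ltr0n.
have [m1 l1] := key c d c0 cd dN.
have Ni0 : (0 : R) <= N%:R^-1 by rewrite invr_ge0 ltW.
have [_ l2] := key 0 N%:R^-1 (lexx 0) Ni0 (lexx _).
split => //; rewrite l1 l2 subr0 muleA -EFinM; congr (_ * _)%E; congr EFin.
by field; rewrite pnatr_eq0 -lt0n.
Qed.

Lemma Qall n : Qprop n.
Proof. by elim: n => [|n IH]; [exact: Q0 | exact: Qstep]. Qed.

Definition H n B : set R := @Irr R `&` [set x | hist Y n B x].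

Lemma EE_zero n B c d : EE n B 0 c d = set0.
Proof.
apply/seteqP; split => x // [hx [_ hm _]].
by have [_ M0 _ _] := inv_state n hx; rewrite hm in M0.
Qed.

Lemma U_set n B a b : 0 <= a ->
  H n B `&` [set x | a < (mm n x)%:R * yy n x < b] =
  \bigcup_M EE n B M (a / M%:R) (b / M%:R).
Proof.
move=> a0; apply/seteqP; split => x.
  case=> -[hx hh] /andP [ha hb].
  have [_ M0 _ _] := inv_state n hx.
  have M0r : (0 : R) < (mm n x)%:R by rewrite ltr0n.
  exists (mm n x) => //; split => //; split => //.
  by rewrite ltr_pdivrMr // ltr_pdivlMr // ![yy n x * _]mulrC ha hb.
case=> M _ [hx [hh hm /andP [ha hb]]].
have [_ M0 _ _] := inv_state n hx.
have M0r : (0 : R) < (mm n x)%:R by rewrite ltr0n.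
rewrite -hm in ha hb.
rewrite ltr_pdivrMr // in ha; rewrite ltr_pdivlMr // in hb.
by split => //=; rewrite ![(mm n x)%:R * _]mulrC ha hb.
Qed.

Lemma U n B a b : 0 <= a -> a <= b -> b <= 1 ->
  measurable (H n B `&` [set x | a < (mm n x)%:R * yy n x < b]) /\
  L (H n B `&` [set x | a < (mm n x)%:R * yy n x < b]) =
  ((b - a)%:E * \sum_(M <oo | M \in setT) L (EE n B M 0 M%:R^-1))%E.
Proof.
move=> a0 ab b1; rewrite U_set //.
have hp : forall M, measurable (EE n B M (a / M%:R) (b / M%:R)) /\
   L (EE n B M (a / M%:R) (b / M%:R)) = ((b - a)%:E * L (EE n B M 0 M%:R^-1))%E.
  move=> M; case: (posnP M) => [-> | M0].
    by rewrite !EE_zero measure0 mule0.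
  have M0r : (0 : R) < M%:R by rewrite ltr0n.
  have Qn := Qall n.
  have [||| m ->] := Qn B M (a / M%:R) (b / M%:R) M0.
  - exact: divr_ge0.
  - by rewrite ler_pM2r ?invr_gt0.
  - by rewrite ler_pdivrMr // mulVf ?gt_eqF.
  split => //; congr (_ * _)%E; congr EFin; rewrite -mulrBl; field.
  by rewrite gt_eqF.
split; first by apply: bigcup_measurable => M _; case: (hp M).
have hb := @measure_bigcup _ _ _ L setT
  (fun M => EE n B M (a / M%:R) (b / M%:R)).
rewrite hb; last 2 first.
- by move=> M _; case: (hp M).
- move=> i j _ _ [x [[_ [_ hi _]] [_ [_ hj _]]]].
  by rewrite -hi -hj.
apply: eq_trans (eq_eseriesr (fun M _ => proj2 (hp M))) _.
by apply: nneseriesZl => M _.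
Qed.

Lemma H_full n B : H n B `&` [set x | 0 < (mm n x)%:R * yy n x < 1] = H n B.
Proof.
apply/seteqP; split => x; first by case.
move=> [hx hh]; split => //=.
have [hy M0 My _] := inv_state n hx.
have y0 : 0 < yy n x by case/IrrP: hy.
by rewrite My andbT mulr_gt0 // ltr0n.
Qed.

Lemma U' n B a b : 0 <= a -> a <= b -> b <= 1 ->
  measurable (H n B) /\
  measurable (H n B `&` [set x | a < (mm n x)%:R * yy n x < b]) /\
  L (H n B `&` [set x | a < (mm n x)%:R * yy n x < b]) = ((b - a)%:E * L (H n B))%E.
Proof.
move=> a0 ab b1.
have [m1 l1] := U n B a0 ab b1.
have [m2 l2] := U n B (lexx 0) ler01 (lexx 1).
rewrite H_full subr0 mul1e in m2 l2.
by rewrite l1 l2.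
Qed.

Lemma LH_fin n B : L (H n B) \is a fin_num.
Proof.
have [m _] := U' n B (lexx 0) ler01 (lexx 1).
have [mI lI] := Irr_meas R.
rewrite ge0_fin_numE //; apply: (@le_lt_trans _ _ (L (@Irr R))).
  by apply: le_measure; rewrite ?inE // => x [].
by rewrite lI ltry.
Qed.

End Q2.
Section Lev.
Variable R : realType.
Variable Y : nat -> R -> int.
Hypothesis HY : Yhyp Y.
Notation L := (@lebesgue_measure R).
Local Notation H := (H Y).

Lemma My_ne n (x : R) (k : nat) : Irr x -> (0 < k)%N ->
  (mm n x)%:R * yy n x != k%:R^-1.
Proof.
move=> hx k0; have [hy M0 _ _] := inv_state n hx.
have [_ _ ny] := IrrP hy.
apply/eqP => e; apply: ny; exists ((mm n x * k)%N%:Q^-1).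
rewrite fmorphV rmorph_nat natrM invfM -e mulrA mulVf ?mul1r //.
by rewrite pnatr_eq0 -lt0n.
Qed.

Lemma Yge n (x : R) (c : int) : Irr x -> odd `|c|%N -> 0 < c ->
  (c <= Y n.+1 x) <-> (mm n x)%:R * yy n x < c%:~R^-1.
Proof.
move=> hx oc c0.
have [hy M0 My _] := inv_state n hx.
have y0 : 0 < yy n x by case/IrrP: hy.
have My0 : 0 < (mm n x)%:R * yy n x by rewrite mulr_gt0 // ltr0n.
have eY := Y_state HY n hx.
have [oY /andP [b1 b2]] := oddfl_spec (((mm n x)%:R * yy n x)^-1).
rewrite -eY in oY b1 b2.
have c0r : (0 : R) < c%:~R by rewrite ltr0z.
set z := (mm n x)%:R * yy n x in My0 b1 b2 *.
split => h.
  have hc : c%:~R <= z^-1 by apply: le_trans b1; rewrite ler_int.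
  rewrite le_inv // in hc.
  have hz : z <= c%:~R^-1 by rewrite le_inv // mulrC.
  rewrite lt_neqAle hz andbT.
  have -> : c = `|c|%N%:Z by rewrite gez0_abs // ltW.
  apply: My_ne hx _; lia.
have hc : c%:~R < z^-1 by rewrite lt_inv // mulrC -lt_inv.
have : (c%:~R : R) < (Y n.+1 x + 2)%:~R by rewrite intrD; apply: lt_trans b2.
rewrite ltr_int; lia.
Qed.

Lemma Yge_nat n (x : R) (k : nat) : Irr x -> odd k -> (0 < k)%N ->
  (k%:Z <= Y n.+1 x) <-> (mm n x)%:R * yy n x < k%:R^-1.
Proof.
move=> hx ok k0; have := @Yge n x k%:Z hx ok; rewrite -pmulrn; apply.
by rewrite ltz_nat.
Qed.

Lemma Y_ge1 n (x : R) : Irr x -> exists j : nat, Y n.+1 x = (2 * j + 1)%N%:Z.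
Proof.
move=> hx; have [oY _ _ _] := HY (isT : (0 < n.+1)%N) hx.
have [_ _ My _] := inv_state n hx.
have h1 : (1%N%:Z <= Y n.+1 x).
  have [_] := Yge_nat n (k := 1) hx isT isT; apply.
  by rewrite invr1.
exists (`|Y n.+1 x|%N %/ 2)%N; lia.
Qed.

Lemma Yeq_set n B (j : nat) :
  H n B `&` [set x | Y n.+1 x = (2 * j + 1)%N%:Z] =
  H n B `&` [set x | (2 * j + 3)%N%:R^-1 < (mm n x)%:R * yy n x < (2 * j + 1)%N%:R^-1].
Proof.
have o1 : odd (2 * j + 1) by lia.
have o3 : odd (2 * j + 3) by lia.
have p1 : (0 < 2 * j + 1)%N by lia.
have p3 : (0 < 2 * j + 3)%N by lia.
apply/seteqP; split => x [[hx hh] h]; split => //=.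
  have h1 : (2 * j + 1)%N%:Z <= Y n.+1 x by rewrite h.
  have h3 : ~ ((2 * j + 3)%N%:Z <= Y n.+1 x) by rewrite h; lia.
  move/(Yge_nat n hx o1 p1) : h1 => h1.
  rewrite h1 andbT lt_neqAle eq_sym My_ne //=.
  by rewrite leNgt; apply/negP => /(Yge_nat n hx o3 p3).
have [oY _ _ _] := HY (isT : (0 < n.+1)%N) hx.
case/andP: h => h3 h1.
move/(Yge_nat n hx o1 p1) : h1 => h1.
have h3' : ~ ((2 * j + 3)%N%:Z <= Y n.+1 x).
  by move/(Yge_nat n hx o3 p3) => h; move: (lt_trans h h3); rewrite ltxx.
lia.
Qed.

End Lev.
Section Dist.
Variable R : realType.
Variable Y : nat -> R -> int.
Hypothesis HY : Yhyp Y.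
Notation L := (@lebesgue_measure R).
Local Notation H := (H Y).

Definition aj (j : nat) : R := (2 * j + 1)%N%:R^-1 - (2 * j + 3)%N%:R^-1.

Lemma aj_ge0 j : 0 <= aj j.
Proof.
rewrite /aj subr_ge0 lef_pV2 ?posrE ?ltr0n ?ler_nat //; lia.
Qed.

Definition SA (A : set int) : \bar R :=
  (\sum_(j <oo) (if `[< A (2 * j + 1)%N%:Z >] then aj j else 0)%:E)%E.

Lemma Lpiece n B j :
  measurable (H n B `&` [set x | Y n.+1 x = (2 * j + 1)%N%:Z]) /\
  L (H n B `&` [set x | Y n.+1 x = (2 * j + 1)%N%:Z]) = ((aj j)%:E * L (H n B))%E.
Proof.
rewrite (Yeq_set HY).
have h1 : (0 : R) <= (2 * j + 3)%N%:R^-1 by rewrite invr_ge0 ler0n.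
have h2 : (2 * j + 3)%N%:R^-1 <= (2 * j + 1)%N%:R^-1 :> R.
  by rewrite lef_pV2 ?posrE ?ltr0n ?ler_nat //; lia.
have h3 : (2 * j + 1)%N%:R^-1 <= 1 :> R by rewrite invf_le1 ?ltr0n ?ler1n //; lia.
by have [_ [m l]] := U' HY n B h1 h2 h3.
Qed.

Lemma LYA n B A :
  measurable (H n B `&` [set x | A (Y n.+1 x)]) /\
  L (H n B `&` [set x | A (Y n.+1 x)]) = (SA A * L (H n B))%E.
Proof.
pose F j := if `[< A (2 * j + 1)%N%:Z >] then
    H n B `&` [set x | Y n.+1 x = (2 * j + 1)%N%:Z] else set0.
have eF : H n B `&` [set x | A (Y n.+1 x)] = \bigcup_j F j.
  apply/seteqP; split => x.
    case=> -[hx hh] hA; have [j hj] := Y_ge1 HY n hx.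
    exists j => //; rewrite /F asboolT; last by rewrite -hj.
    by split.
  case=> j _; rewrite /F; case: asboolP => // hA [hh hj].
  by split => //=; rewrite hj.
have mF : forall j, measurable (F j).
  by move=> j; rewrite /F; case: asboolP => _ //; case: (Lpiece n B j).
rewrite eF; split; first by apply: bigcup_measurable => j _.
have hb := @measure_bigcup _ _ _ L setT F.
rewrite hb; last 2 first.
- by move=> j _; apply: mF.
- move=> i j _ _ [x []]; rewrite /F.
  case: asboolP => _ // [_ hi]; case: asboolP => _ // [_ hj].
  by rewrite /= in hi hj; rewrite hi in hj; move: hj; lia.
have fin := LH_fin HY n B.
have eLH : L (H n B) = (fine (L (H n B)))%:E by rewrite fineK.
have tF : forall j, L (F j) =
    ((fine (L (H n B)))%:E * (if `[< A (2 * j + 1)%N%:Z >] then aj j else 0)%:E)%E.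
  move=> j; rewrite /F; case: asboolP => _; last by rewrite measure0 mule0.
  by rewrite (proj2 (Lpiece n B j)) muleC -eLH.
rewrite (eq_eseriesr (fun j _ => tF j)) nneseriesZl; last first.
  by move=> j _; case: ifP => _; rewrite lee_fin // aj_ge0.
rewrite muleC -eLH; congr (_ * _)%E; rewrite /SA; congr (limn _).
apply/funext => k; apply: eq_bigl => i; by rewrite in_setT.
Qed.

Lemma H0 B : H 0 B = @Irr R.
Proof.
by apply/seteqP; split => x; [case | move=> hx; split => // i; rewrite ltn0].
Qed.

Lemma LH_prod n B : L (H n B) = (\prod_(i < n) SA (B i))%E.
Proof.
elim: n => [|n IH].
  by rewrite H0 big_ord0; case: (Irr_meas R).
have -> : H n.+1 B = H n B `&` [set x | B n (Y n.+1 x)].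
  apply/seteqP; split => x.
    case=> hx hh; split; last by apply: hh.
    by split => // i hi; apply: hh; rewrite ltnS ltnW.
  case=> -[hx hh] hB; split => // i; rewrite ltnS leq_eqVlt => /orP [/eqP -> //|].
  exact: hh.
by rewrite (proj2 (LYA n B (B n))) IH big_ord_recr /= muleC.
Qed.

Lemma HT n : H n (fun _ => setT) = @Irr R.
Proof. by apply/seteqP; split => x; [case | move=> hx; split]. Qed.

Lemma L_Y n A : measurable (@Irr R `&` Y n.+1 @^-1` A) /\
  L (@Irr R `&` Y n.+1 @^-1` A) = SA A.
Proof.
have [m l] := LYA n (fun _ => setT) A.
rewrite HT in m l; rewrite l; split => //.
by have [_ ->] := Irr_meas R; rewrite mule1.
Qed.

Lemma L_Yge n (c : int) : odd `|c|%N -> 0 < c ->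
  L (@Irr R `&` [set x | c <= Y n.+1 x]) = (c%:~R^-1)%:E.
Proof.
move=> oc c0.
have c1 : (1 : R) <= c%:~R by rewrite ler1z.
have ci0 : (0 : R) <= c%:~R^-1 by rewrite invr_ge0 (le_trans ler01).
have ci1 : c%:~R^-1 <= 1 :> R by rewrite invf_le1 // (lt_le_trans ltr01).
have [_ [_ l]] := U' HY n (fun _ => setT) (lexx 0) ci0 ci1.
rewrite HT subr0 in l.
have [_ lI] := Irr_meas R; rewrite lI mule1 in l.
rewrite -l; congr L; apply/seteqP; split => x [hx h]; split => //=.
  have [hy M0 _ _] := inv_state n hx.
  have y0 : 0 < yy n x by case/IrrP: hy.
  rewrite mulr_gt0 ?ltr0n //=.
  by apply/(Yge HY n hx oc c0).
by case/andP: h => _ h; apply/(Yge HY n hx oc c0).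
Qed.

End Dist.
Lemma prod_reindex (R : realType) (s : seq nat) (N : nat) (G : nat -> \bar R) :
  uniq s -> all (fun n => 1 <= n)%N s -> (forall i, i \in s -> i <= N)%N ->
  (\prod_(i < N) (if i.+1 \in s then G i.+1 else 1) = \prod_(i <- s) G i)%E.
Proof.
move=> us hall hN.
rewrite -(big_mkord xpredT (fun i => if i.+1 \in s then G i.+1 else 1%E)).
rewrite -big_mkcond /=.
have e := big_add1 1%E ( *%E) 0 N.+1 (fun i => i \in s) G.
rewrite /= in e; rewrite -e -big_filter.
apply: perm_big; apply: uniq_perm => //.
  by apply: filter_uniq; exact: iota_uniq.
move=> i; rewrite mem_filter mem_index_iota; case his: (i \in s) => //=.
have := allP hall i his; have := hN i his; lia.
Qed.

Unset Implicit Arguments.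

Theorem lemma3p7 (R : realType) (Y : nat -> R -> int) :
  Yhyp Y ->
  [/\ (forall n k : nat, (1 <= n)%N -> (1 <= k)%N ->
         lebesgue_measure (@Irr R `&` [set x | 2 * k%:Z - 1 <= Y n x])
         = ((2 * k%:R - 1)^-1)%:E),
      (forall (n : nat) (t : R), (1 <= n)%N -> 0 < t ->
         (((t + 2)^-1)%:E <
           lebesgue_measure (@Irr R `&` [set x | (t <= (Y n x)%:~R)%R]))%E /\
         (lebesgue_measure (@Irr R `&` [set x | (t <= (Y n x)%:~R)%R])
           <= (t^-1)%:E)%E)
    & iid_Irr Y].
Proof.
move=> HY; split.
- case=> // n k _ k1.
  have oc : odd `|(2 * k%:Z - 1)%R|%N by lia.
  have c0 : 0 < 2 * k%:Z - 1 by lia.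
  rewrite (L_Yge HY n oc c0); congr (_^-1)%:E.
  by rewrite intrB intrM -pmulrn.
- case=> // n t _ t0.
  have [oo /andP [b1 b2]] := oddfl_spec (- t).
  set o := oddfl (- t) in oo b1 b2.
  have oc : odd `|(- o)%R|%N by rewrite abszN.
  have tc : t <= (- o)%:~R by rewrite intrN lerNr.
  have ct : (- o)%:~R < t + 2 by rewrite intrN ltrNl opprD; lra.
  have c0 : 0 < - o by rewrite -(ltr0z R) (lt_le_trans t0 tc).
  have c0r : (0 : R) < (- o)%:~R by rewrite ltr0z.
  have -> : @Irr R `&` [set x | t <= (Y n.+1 x)%:~R] =
      @Irr R `&` [set x | - o <= Y n.+1 x].
    apply/seteqP; split => x [hx h]; split => //=.
      have [oY _ _ _] := HY n.+1 x isT hx.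
      have : ((- o - 2)%:~R : R) < (Y n.+1 x)%:~R.
        by apply: lt_le_trans h; rewrite intrB; lra.
      rewrite ltr_int; lia.
    by apply: (le_trans tc); rewrite ler_int.
  rewrite (L_Yge HY n oc c0) !lte_fin !lee_fin; split.
    by rewrite ltf_pV2 ?posrE // ?addr_gt0.
  by rewrite lef_pV2 ?posrE.
split.
- by case=> // n A _; case: (L_Y HY n A).
- by case=> // n [|m] // A _ _; rewrite (proj2 (L_Y HY n A)) (proj2 (L_Y HY m A)).
move=> s A us hall.
pose N := (\max_(i <- s) i)%N.
have hN : forall i, i \in s -> (i <= N)%N.
  by move=> i his; apply: (@leq_bigmax_seq _ s xpredT id i his).
pose B i := if i.+1 \in s then A i.+1 else setT.
have eS : @Irr R `&` \bigcap_(i in [set` s]) Y i @^-1` A i = H Y N B.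
  apply/seteqP; split => x [hx h]; split => //.
    move=> i iN; rewrite /B; case: ifP => // his.
    exact: h.
  move=> i his; have i1 := allP hall i his.
  case: i i1 his => // i _ his.
  have := h i; rewrite /B his; apply.
  by have := hN _ his.
rewrite eS (LH_prod HY).
have sT : SA R setT = 1%E.
  have [_ l] := L_Y HY 0 setT.
  rewrite preimage_setT setIT in l; rewrite -l.
  by case: (Irr_meas R).
have e1 : (\prod_(i < N) SA R (B i) =
    \prod_(i < N) (if i.+1 \in s then SA R (A i.+1) else 1))%E.
  by apply: eq_bigr => i _; rewrite /B; case: ifP.
have e2 := prod_reindex (fun i => SA R (A i)) us hall hN.
rewrite /= in e2; rewrite e1 e2.
rewrite big_seq [RHS]big_seq; apply: eq_bigr => i his.
have := allP hall i his; case: i his => // i his _.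
by rewrite (proj2 (L_Y HY i (A i.+1))).
Qed.
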